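(* Assume (A1) and let $i,j\in I_N$. Each of the functions $\mathcal{D}_{\mathrm{junction}}^{ji}$, $\mathcal{D}_{\mathrm{linear}}^{ji}$, $\mathcal{D}_{\mathrm{implicit}}^{ji}$ is convex and $C^1$ on $J_j^*\times J_i^*$ (as a function of $(y_j,x_i)\in(0,\infty)^2$), and if $\tilde{\mathcal{D}}$ denotes any one of them, then for all $(y,x)\in J_j^*\times J_i^*$, $$\tilde{\mathcal{D}}-x_i\partial_{x_i}\tilde{\mathcal{D}}-y_j\partial_{y_j}\tilde{\mathcal{D}}+H_i(\partial_{x_i}\tilde{\mathcal{D}})=0,\qquad \tilde{\mathcal{D}}-x_i\partial_{x_i}\tilde{\mathcal{D}}-y_j\partial_{y_j}\tilde{\mathcal{D}}+H_j(-\partial_{y_j}\tilde{\mathcal{D}})=0,$$ all quantities evaluated at $(y,x)$.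
   Context: Junction: fix an integer $N\ge1$ and $N$ distinct unit vectors $e_1,\dots,e_N\in\mathbb{R}^2$. Set $J_i=[0,\infty)e_i$, $J_i^*=J_i\setminus\{0\}$, $J=\bigcup_iJ_i$, $I_N=\{1,\dots,N\}$. Each $x\in J_i$ is written $x=x_ie_i$, $x_i\ge0$. For a function $f$ on $J\times J$ (variables $(y,x)$), $f^{ji}$ denotes its restriction to $J_j\times J_i$, viewed as a function of $(y_j,x_i)$. (A1): there is $\gamma>0$ with $L_i\in C^2(\mathbb{R})$, $L_i''\ge\gamma$ for each $i$; $H_i(p)=\sup_{q\in\mathbb{R}}(pq-L_i(q))$. $L_0(0)=\min_jL_j(0)$, $I_0=\{l:L_l(0)=L_0(0)\}$. $K_l(\xi)=L_l(\xi)-\xi L_l'(\xi)-L_0(0)$; $\xi_l^-\le0$ (resp. $\xi_l^+\ge0$) is the unique zero of $K_l$ on $(-\infty,0]$ (resp. $[0,\infty)$). For $\tau\in[0,1]$: $\mathcal{E}_1(\tau,y)=\tau L_j(-y_j/\tau)-\tau L_0(0)$ if $y=y_je_j\ne0$, $\tau\ne0$; $\mathcal{E}_1(\tau,0)=0$; $\mathcal{E}_1(0,y)=+\infty$ if $y\ne0$. $\mathcal{E}_2(\tau,x)=(1-\tau)L_i(x_i/(1-\tau))+\tau L_0(0)$ if $x=x_ie_i\ne0$, $\tau\ne1$; $\mathcal{E}_2(\tau,0)=L_0(0)$; $\mathcal{E}_2(1,x)=+\infty$ if $x\ne0$. $\mathcal{D}_{\mathrm{junction}}(y,x)=\inf_{0\le\tau_1\le\tau_2\le1}\{\mathcal{E}_1(\tau_1,y)+\mathcal{E}_2(\tau_2,x)\}$;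 $\mathcal{D}_{\mathrm{implicit}}(y,x)=\inf_{0\le\tau\le1}\{\mathcal{E}_1(\tau,y)+\mathcal{E}_2(\tau,x)\}$; for $(y,x)\in J_j\times J_i$, $\mathcal{D}_{\mathrm{linear}}^{ji}(y,x)=-L_j'(\xi_j^-)y_j+L_i'(\xi_i^+)x_i+L_0(0)$. *)

(* Defs.v *)
From Stdlib Require Import Reals Lra List ClassicalEpsilon.
Open Scope R_scope.

(* Extended real with +oo : None = +infinity. *)
Definition Rinfty := option R.

Definition is_glb (S : R -> Prop) (m : R) : Prop :=
  (forall r, S r -> m <= r) /\ (forall b, (forall r, S r -> b <= r) -> b <= m).
Definition Rinf (S : R -> Prop) : R := epsilon (inhabits 0) (is_glb S).
Definition Rsup (S : R -> Prop) : R := epsilon (inhabits 0) (is_lub S).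

(* L_0(0) = min_{j in I_N} L_j(0), with I_N = {0,...,N-1} (N >= 1). *)
Definition L0min (N : nat) (L : nat -> R -> R) : R :=
  fold_right Rmin (L 0%nat 0) (map (fun l => L l 0) (seq 0 N)).

Definition Hconj (Li : R -> R) (p : R) : R :=
  Rsup (fun r => exists q, r = p * q - Li q).

Definition Kfun (Ll dLl : R -> R) (L0 : R) (xi : R) : R :=
  Ll xi - xi * dLl xi - L0.

(* A point y = y_j e_j of branch J_j is given by its coordinate y_j >= 0;
   y_j = 0 is the junction point 0. *)
Definition E1 (Lj : R -> R) (L0 : R) (tau yj : R) : Rinfty :=
  if Req_EM_T yj 0 then Some 0
  else if Req_EM_T tau 0 then None
  else Some (tau * Lj (- yj / tau) - tau * L0).

Definition E2 (Li : R -> R) (L0 : R) (tau xi : R) : Rinfty :=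
  if Req_EM_T xi 0 then Some L0
  else if Req_EM_T tau 1 then None
  else Some ((1 - tau) * Li (xi / (1 - tau)) + tau * L0).

(* D_junction^{ji}(y_j, x_i): infimum over 0 <= t1 <= t2 <= 1 of
   E1(t1,y) + E2(t2,x), where +oo values are discarded (they never
   affect the infimum, since finite values always exist). *)
Definition Djunction (Lj Li : R -> R) (L0 : R) (yj xi : R) : R :=
  Rinf (fun r => exists t1 t2 a b, 0 <= t1 <= t2 /\ t2 <= 1 /\
          E1 Lj L0 t1 yj = Some a /\ E2 Li L0 t2 xi = Some b /\ r = a + b).

Definition Dimplicit (Lj Li : R -> R) (L0 : R) (yj xi : R) : R :=
  Rinf (fun r => exists t a b, 0 <= t <= 1 /\
          E1 Lj L0 t yj = Some a /\ E2 Li L0 t xi = Some b /\ r = a + b).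

Definition Dlinear (dLj dLi : R -> R) (xim_j xip_i L0 : R) (yj xi : R) : R :=
  - dLj xim_j * yj + dLi xip_i * xi + L0.

Definition quad (y x : R) : Prop := 0 < y /\ 0 < x.

Definition convex_quad (f : R -> R -> R) : Prop :=
  forall y1 x1 y2 x2 t, quad y1 x1 -> quad y2 x2 -> 0 <= t <= 1 ->
    f (t * y1 + (1 - t) * y2) (t * x1 + (1 - t) * x2)
      <= t * f y1 x1 + (1 - t) * f y2 x2.

Definition cont2_at (g : R -> R -> R) (y x : R) : Prop :=
  forall eps, 0 < eps -> exists delta, 0 < delta /\
    forall y' x', Rabs (y' - y) < delta -> Rabs (x' - x) < delta ->
      Rabs (g y' x' - g y x) < eps.

Definition C1_quad_with (f dy dx : R -> R -> R) : Prop :=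
  forall y x, quad y x ->
    derivable_pt_lim (fun y' => f y' x) y (dy y x) /\
    derivable_pt_lim (fun x' => f y x') x (dx y x) /\
    cont2_at dy y x /\ cont2_at dx y x.

Definition junction_property (Hj Hi : R -> R) (D : R -> R -> R) : Prop :=
  convex_quad D /\
  exists dy dx : R -> R -> R,
    C1_quad_with D dy dx /\
    forall y x, quad y x ->
      D y x - x * dx y x - y * dy y x + Hi (dx y x) = 0 /\
      D y x - x * dx y x - y * dy y x + Hj (- dy y x) = 0.

(* Main.v *)
Require Import Defs.
From Stdlib Require Import Reals Lra ClassicalEpsilon Classical.
Open Scope R_scope.

Lemma dpl_ext (f g : R -> R) x l :
  (forall z, f z = g z) -> derivable_pt_lim f x l -> derivable_pt_lim g x l.
Proof.
  intros Hfg H eps Heps. destruct (H eps Heps) as [d Hd]. exists d.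
  intros h Hh Hl. rewrite <- !Hfg. apply Hd; auto.
Qed.

Lemma cont_eps (f : R -> R) x : continuity_pt f x ->
  forall eps, 0 < eps -> exists d, 0 < d /\ forall x', Rabs (x' - x) < d -> Rabs (f x' - f x) < eps.
Proof.
  intros H eps Heps. destruct (H eps Heps) as [d [Hd H']]. exists d; split; auto.
  intros x' Hx'. destruct (Req_dec x' x) as [->|Hne].
  - unfold Rminus; rewrite Rplus_opp_r, Rabs_R0; auto.
  - apply (H' x'). split. split; [exact I| auto]. exact Hx'.
Qed.

Lemma dpl_cont f x l : derivable_pt_lim f x l -> continuity_pt f x.
Proof. intros H. apply derivable_continuous_pt. exists l. exact H. Qed.

Lemma dpl_aff (g : R -> R) a b c d x g' :
  derivable_pt_lim g (a*x+b) g' ->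
  derivable_pt_lim (fun z => c * g (a*z+b) + d) x (c*(g'*a)).
Proof.
  intros Hg.
  assert (Hl : derivable_pt_lim (fun z => a*z+b) x a).
  { intros eps Heps. exists (mkposreal 1 Rlt_0_1). intros h Hh _.
    replace ((a * (x + h) + b - (a * x + b)) / h - a) with 0 by (field; auto).
    rewrite Rabs_R0; auto. }
  pose proof (derivable_pt_lim_comp _ _ _ _ _ Hl Hg) as H1.
  pose proof (derivable_pt_lim_scal _ c _ _ H1) as H2.
  pose proof (derivable_pt_lim_plus _ _ _ _ _ H2 (derivable_pt_lim_const d x)) as H3.
  replace (c*(g'*a)) with (c*(g'*a) + 0) by ring.
  eapply dpl_ext; [|exact H3]. intros z. reflexivity.
Qed.

Section Conv.
Variables (f f' f'' : R -> R) (g : R).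
Hypothesis Hg : 0 < g.
Hypothesis H1 : forall z, derivable_pt_lim f z (f' z).
Hypothesis H2 : forall z, derivable_pt_lim f' z (f'' z).
Hypothesis H3 : forall z, g <= f'' z.

Lemma dmono u v : u <= v -> f' u <= f' v.
Proof.
  intros Huv. destruct (Req_dec u v) as [->|Hne]; [lra|].
  destruct (MVT_cor2 f' f'' u v) as [c [Hc _]]; [lra| intros; apply H2|].
  specialize (H3 c). nra.
Qed.

Lemma tangent b q : f b + f' b * (q - b) <= f q.
Proof.
  destruct (Rtotal_order b q) as [Hlt|[->|Hlt]].
  - destruct (MVT_cor2 f f' b q) as [c [Hc Hr]]; [lra| intros; apply H1|].
    pose proof (dmono b c). nra.
  - lra.
  - destruct (MVT_cor2 f f' q b) as [c [Hc Hr]]; [lra| intros; apply H1|].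
    pose proof (dmono c b). nra.
Qed.

Definition Kt z := f z - z * f' z.

Lemma Kt_der z : derivable_pt_lim Kt z (- z * f'' z).
Proof.
  pose proof (derivable_pt_lim_mult id f' z _ _ (derivable_pt_lim_id z) (H2 z)) as Hm.
  pose proof (derivable_pt_lim_minus _ _ _ _ _ (H1 z) Hm) as Hd.
  replace (- z * f'' z) with (f' z - (1 * f' z + id z * f'' z)) by (unfold id; ring).
  eapply dpl_ext; [|exact Hd]. intros; reflexivity.
Qed.

Lemma Kt_mono_neg u v : u <= v -> v <= 0 -> Kt u <= Kt v.
Proof.
  intros Huv Hv. destruct (Req_dec u v) as [->|Hne]; [lra|].
  destruct (MVT_cor2 Kt (fun z => - z * f'' z) u v) as [c [Hc Hr]];
    [lra| intros; apply Kt_der|].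
  specialize (H3 c). assert (0 <= - c * f'' c) by nra. nra.
Qed.

Lemma Kt_mono_pos u v : 0 <= u -> u <= v -> Kt v <= Kt u.
Proof.
  intros Hu Huv. destruct (Req_dec u v) as [->|Hne]; [lra|].
  destruct (MVT_cor2 Kt (fun z => - z * f'' z) u v) as [c [Hc Hr]];
    [lra| intros; apply Kt_der|].
  specialize (H3 c). assert (- c * f'' c <= 0) by nra. nra.
Qed.

Lemma Kt_bound z : Kt z <= Kt 0 - g * (z*z) / 2.
Proof.
  set (h := fun z => Kt z + g * (z*z)/2).
  assert (Hh : forall z, derivable_pt_lim h z (- z * (f'' z - g))).
  { intros w. unfold h.
    pose proof (derivable_pt_lim_mult id id w _ _ (derivable_pt_lim_id w) (derivable_pt_lim_id w)) as Hm.
    pose proof (derivable_pt_lim_scal _ (g/2) _ _ Hm) as Hs.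
    pose proof (derivable_pt_lim_plus _ _ _ _ _ (Kt_der w) Hs) as Hp.
    replace (- w * (f'' w - g)) with (- w * f'' w + g/2 * (1 * id w + id w * 1)) by (unfold id; field).
    eapply dpl_ext; [|exact Hp]. intros; unfold mult_real_fct, mult_fct, plus_fct, id. simpl. field. }
  assert (h z <= h 0).
  { destruct (Rtotal_order z 0) as [Hlt|[->|Hlt]].
    - destruct (MVT_cor2 h (fun z => - z * (f'' z - g)) z 0) as [c [Hc Hr]]; [lra| intros; apply Hh|].
      specialize (H3 c). assert (0 <= -c*(f'' c - g)) by nra. nra.
    - lra.
    - destruct (MVT_cor2 h (fun z => - z * (f'' z - g)) 0 z) as [c [Hc Hr]]; [lra| intros; apply Hh|].
      specialize (H3 c). assert (-c*(f'' c - g) <= 0) by nra. nra. }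
  unfold h in H. lra.
Qed.

Lemma Hconj_eq b : Hconj f (f' b) = b * f' b - f b.
Proof.
  set (S := fun r => exists q, r = f' b * q - f q).
  assert (Hl : is_lub S (b * f' b - f b)).
  { split.
    - intros r [q ->]. pose proof (tangent b q). lra.
    - intros m Hm. apply Hm. exists b. ring. }
  unfold Hconj, Rsup. fold S.
  pose proof (epsilon_spec (inhabits 0) (is_lub S) (ex_intro _ _ Hl)) as He.
  destruct He as [Hu1 Hu2]. destruct Hl as [Hl1 Hl2].
  apply Rle_antisym; [apply Hu2; auto | apply Hl2; auto].
Qed.

End Conv.

Definition SUBG (D : R -> R -> R) y x vy vx := forall y' x', quad y' x' ->
  D y x + vy*(y'-y) + vx*(x'-x) <= D y' x'.
Definition UPG (D G : R -> R -> R) y x := (forall y' x', quad y' x' -> D y' x' <= G y' x')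
  /\ G y x = D y x /\ cont2_at G y x.

Lemma abs_div_le u w h : 0 <= u <= w -> h <> 0 -> Rabs (u/h) <= Rabs (w/h).
Proof.
  intros [Hu Hw] Hh. unfold Rdiv. rewrite !Rabs_mult.
  apply Rmult_le_compat_r; [apply Rabs_pos|]. rewrite !Rabs_right; lra.
Qed.

Lemma der_y (D G : R -> R -> R) y x vy vx : quad y x -> SUBG D y x vy vx -> UPG D G y x ->
  derivable_pt_lim (fun y' => G y' x) y vy -> derivable_pt_lim (fun y' => D y' x) y vy.
Proof.
  intros [Hy Hx] Hs [Hu [He _]] HG eps Heps.
  destruct (HG eps Heps) as [d Hd].
  assert (Hp : 0 < Rmin d y) by (apply Rmin_glb_lt; [apply cond_pos|lra]).
  exists (mkposreal _ Hp). intros h Hh Hl. simpl in Hl.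
  assert (Hl1 : Rabs h < d) by (eapply Rlt_le_trans; [exact Hl| apply Rmin_l]).
  assert (Hl2 : Rabs h < y) by (eapply Rlt_le_trans; [exact Hl| apply Rmin_r]).
  assert (Hq : quad (y+h) x).
  { split; [|lra]. pose proof (Rle_abs (-h)). rewrite Rabs_Ropp in H. lra. }
  specialize (Hd h Hh Hl1). simpl in Hd.
  pose proof (Hs _ _ Hq) as S1. pose proof (Hu _ _ Hq) as U1.
  eapply Rle_lt_trans; [|exact Hd].
  replace ((D (y + h) x - D y x) / h - vy) with ((D (y + h) x - D y x - h*vy) / h) by (field; auto).
  replace ((G (y + h) x - G y x) / h - vy) with ((G (y + h) x - G y x - h*vy) / h) by (field; auto).
  apply abs_div_le; [|auto]. rewrite He. split; nra.
Qed.

Lemma abs_lin_bound a z d : Rabs z < d -> - (Rabs a * d) <= a * z.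
Proof.
  intros H. pose proof (Rle_abs (-(a*z))). rewrite Rabs_Ropp, Rabs_mult in H0.
  assert (Rabs a * Rabs z <= Rabs a * d) by (apply Rmult_le_compat_l; [apply Rabs_pos| lra]). lra.
Qed.

Lemma cont_y (D dy dx : R -> R -> R) :
  (forall y x, quad y x -> SUBG D y x (dy y x) (dx y x)) ->
  (forall y x, quad y x -> exists G, UPG D G y x) ->
  (forall y x, quad y x -> derivable_pt_lim (fun y' => D y' x) y (dy y x)) ->
  forall y x, quad y x -> cont2_at dy y x.
Proof.
  intros Hsub Hup Hder y x Hq eps Heps. pose proof Hq as [Hy Hx].
  destruct (Hder y x Hq (eps/4)) as [d0 Hd0]; [lra|].
  pose proof (cond_pos d0) as Hd0p.
  set (h := Rmin d0 y / 2).
  assert (Hh0 : 0 < h) by (unfold h; assert (0 < Rmin d0 y) by (apply Rmin_glb_lt; lra); lra).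
  assert (Hh1 : h < d0) by (unfold h; pose proof (Rmin_l d0 y); lra).
  assert (Hh2 : h <= y/2) by (unfold h; pose proof (Rmin_r d0 y); lra).
  assert (Hp := Hd0 h ltac:(lra) ltac:(rewrite Rabs_right; lra)).
  assert (Hm := Hd0 (-h) ltac:(lra) ltac:(rewrite Rabs_Ropp, Rabs_right; lra)).
  replace (y + -h) with (y - h) in Hm by ring.
  apply Rabs_def2 in Hp. apply Rabs_def2 in Hm.
  set (qp := (D (y + h) x - D y x) / h) in Hp.
  set (qm := (D (y - h) x - D y x) / - h) in Hm.
  assert (Eqp : qp * h = D (y + h) x - D y x) by (unfold qp; field; lra).
  assert (Eqm : qm * (-h) = D (y - h) x - D y x) by (unfold qm; field; lra).
  assert (Hp1 : (qp - dy y x) * h < eps/4 * h) by (apply Rmult_lt_compat_r; lra).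
  assert (Hp2 : -(eps/4) * h < (qp - dy y x) * h) by (apply Rmult_lt_compat_r; lra).
  assert (Hm1 : (qm - dy y x) * h < eps/4 * h) by (apply Rmult_lt_compat_r; lra).
  assert (Hm2 : -(eps/4) * h < (qm - dy y x) * h) by (apply Rmult_lt_compat_r; lra).
  assert (Qp : quad (y+h) x) by (split; lra).
  assert (Qm : quad (y-h) x) by (split; lra).
  destruct (Hup _ _ Qp) as [G1 [U1 [E1 C1]]].
  destruct (Hup _ _ Qm) as [G2 [U2 [E2 C2]]].
  destruct (C1 (h*eps/4)) as [d1 [Hd1 C1']]; [nra|].
  destruct (C2 (h*eps/4)) as [d2 [Hd2 C2']]; [nra|].
  set (A := Rabs (dy y x) + Rabs (dx y x)).
  assert (HA : 0 <= A) by (unfold A; pose proof (Rabs_pos (dy y x)); pose proof (Rabs_pos (dx y x)); lra).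
  set (d3 := h*eps/(4*(A+1))).
  assert (Hd3 : 0 < d3) by (unfold d3; apply Rdiv_lt_0_compat; nra).
  assert (Hd3e : d3 * (A+1) = h*eps/4) by (unfold d3; field; lra).
  exists (Rmin (Rmin d1 d2) (Rmin d3 (Rmin (y/2) x))).
  split.
  { repeat apply Rmin_glb_lt; lra. }
  intros y' x' Hy' Hx'.
  assert (B1 : Rabs (y'-y) < d1 /\ Rabs (y'-y) < d2 /\ Rabs (y'-y) < d3 /\ Rabs (y'-y) < y/2).
  { pose proof (Rmin_l (Rmin d1 d2) (Rmin d3 (Rmin (y/2) x))).
    pose proof (Rmin_r (Rmin d1 d2) (Rmin d3 (Rmin (y/2) x))).
    pose proof (Rmin_l d1 d2). pose proof (Rmin_r d1 d2). pose proof (Rmin_l d3 (Rmin (y/2) x)).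
    pose proof (Rmin_r d3 (Rmin (y/2) x)). pose proof (Rmin_l (y/2) x). lra. }
  assert (B2 : Rabs (x'-x) < d1 /\ Rabs (x'-x) < d2 /\ Rabs (x'-x) < d3 /\ Rabs (x'-x) < x).
  { pose proof (Rmin_l (Rmin d1 d2) (Rmin d3 (Rmin (y/2) x))).
    pose proof (Rmin_r (Rmin d1 d2) (Rmin d3 (Rmin (y/2) x))).
    pose proof (Rmin_l d1 d2). pose proof (Rmin_r d1 d2). pose proof (Rmin_l d3 (Rmin (y/2) x)).
    pose proof (Rmin_r d3 (Rmin (y/2) x)). pose proof (Rmin_r (y/2) x). lra. }
  destruct B1 as [B1a [B1b [B1c B1d]]]. destruct B2 as [B2a [B2b [B2c B2d]]].
  pose proof (Rle_abs (y'-y)) as Ay1. pose proof (Rle_abs (-(y'-y))) as Ay2. rewrite Rabs_Ropp in Ay2.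
  pose proof (Rle_abs (x'-x)) as Ax1. pose proof (Rle_abs (-(x'-x))) as Ax2. rewrite Rabs_Ropp in Ax2.
  assert (Q : quad y' x') by (split; lra).
  assert (Q1 : quad (y'+h) x') by (split; lra).
  assert (Q2 : quad (y'-h) x') by (split; lra).
  pose proof (Hsub _ _ Q _ _ Q1) as S1. pose proof (Hsub _ _ Q _ _ Q2) as S2.
  pose proof (Hsub _ _ Hq _ _ Q) as S0.
  pose proof (U1 _ _ Q1) as V1. pose proof (U2 _ _ Q2) as V2.
  assert (W1 := C1' (y'+h) x' ltac:(replace (y'+h-(y+h)) with (y'-y) by ring; lra) B2a).
  assert (W2 := C2' (y'-h) x' ltac:(replace (y'-h-(y-h)) with (y'-y) by ring; lra) B2b).
  apply Rabs_def2 in W1. apply Rabs_def2 in W2.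
  pose proof (abs_lin_bound (dy y x) (y'-y) d3 B1c).
  pose proof (abs_lin_bound (dx y x) (x'-x) d3 B2c).
  assert (Rabs (dy y x) * d3 + Rabs (dx y x) * d3 <= h*eps/4).
  { rewrite <- Hd3e. unfold A. nra. }
  assert (L1 : h * (dy y' x' - dy y x) < h * eps) by nra.
  assert (L2 : h * (- eps) < h * (dy y' x' - dy y x)) by nra.
  apply Rmult_lt_reg_l in L1; [|lra]. apply Rmult_lt_reg_l in L2; [|lra].
  apply Rabs_def1; lra.
Qed.

Definition swp (F : R -> R -> R) := fun a b => F b a.

Lemma quad_swp y x : quad y x -> quad x y.
Proof. intros [H1 H2]; split; auto. Qed.

Lemma SUBG_swp D y x vy vx : SUBG D y x vy vx -> SUBG (swp D) x y vx vy.
Proof. intros H x' y' Hq. unfold swp. pose proof (H y' x' (quad_swp _ _ Hq)). lra. Qed.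

Lemma cont2_swp g y x : cont2_at g y x -> cont2_at (swp g) x y.
Proof.
  intros H eps He. destruct (H eps He) as [d [Hd H']]. exists d; split; auto.
  intros a b Ha Hb. unfold swp. apply H'; auto.
Qed.

Lemma UPG_swp D G y x : UPG D G y x -> UPG (swp D) (swp G) x y.
Proof.
  intros [H1 [H2 H3]]. split; [|split].
  - intros a b Hq. apply H1. apply quad_swp; auto.
  - exact H2.
  - apply cont2_swp; auto.
Qed.

Definition PROPS (Hj Hi : R -> R) (D : R -> R -> R) y x vy vx G :=
  SUBG D y x vy vx /\ UPG D G y x /\
  derivable_pt_lim (fun y' => G y' x) y vy /\ derivable_pt_lim (fun x' => G y x') x vx /\
  D y x - x*vx - y*vy + Hi vx = 0 /\ D y x - x*vx - y*vy + Hj (- vy) = 0.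

Lemma GEN (Hj Hi : R -> R) (D : R -> R -> R) :
  (forall y x, quad y x -> exists vy vx G, PROPS Hj Hi D y x vy vx G) ->
  junction_property Hj Hi D.
Proof.
  intros Hex.
  set (P := fun y x (v : R * R) => quad y x -> exists G, PROPS Hj Hi D y x (fst v) (snd v) G).
  assert (HP : forall y x, exists v, P y x v).
  { intros y x. destruct (classic (quad y x)) as [Hq|Hq].
    - destruct (Hex y x Hq) as [vy [vx [G HG]]]. exists (vy, vx). intros _. exists G. exact HG.
    - exists (0,0). intros H; contradiction. }
  set (ch := fun y x => epsilon (inhabits (0,0)) (P y x)).
  assert (Hch : forall y x, quad y x -> exists G, PROPS Hj Hi D y x (fst (ch y x)) (snd (ch y x)) G).
  { intros y x Hq. apply (epsilon_spec (inhabits (0,0)) (P y x) (HP y x)). exact Hq. }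
  set (dy := fun y x => fst (ch y x)). set (dx := fun y x => snd (ch y x)).
  assert (Hsub : forall y x, quad y x -> SUBG D y x (dy y x) (dx y x)).
  { intros y x Hq. destruct (Hch y x Hq) as [G HG]. apply HG. }
  assert (Hup : forall y x, quad y x -> exists G, UPG D G y x).
  { intros y x Hq. destruct (Hch y x Hq) as [G HG]. exists G. apply HG. }
  assert (Hdy : forall y x, quad y x -> derivable_pt_lim (fun y' => D y' x) y (dy y x)).
  { intros y x Hq. destruct (Hch y x Hq) as [G HG]. destruct HG as [H1 [H2 [H3 _]]].
    eapply der_y; eauto. }
  assert (Hdx : forall y x, quad y x -> derivable_pt_lim (fun x' => D y x') x (dx y x)).
  { intros y x Hq. destruct (Hch y x Hq) as [G HG]. destruct HG as [H1 [H2 [H3 [H4 _]]]].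
    apply (der_y (swp D) (swp G) x y (dx y x) (dy y x)); auto.
    - apply quad_swp; auto.
    - apply SUBG_swp; auto.
    - apply UPG_swp; auto. }
  split.
  - intros y1 x1 y2 x2 t Hq1 Hq2 Ht.
    assert (Hq : quad (t*y1 + (1-t)*y2) (t*x1 + (1-t)*x2)).
    { destruct Hq1, Hq2. split; nra. }
    pose proof (Hsub _ _ Hq _ _ Hq1) as S1. pose proof (Hsub _ _ Hq _ _ Hq2) as S2.
    set (R0 := D (t * y1 + (1 - t) * y2) (t * x1 + (1 - t) * x2)) in *.
    set (a := dy (t * y1 + (1 - t) * y2) (t * x1 + (1 - t) * x2)) in *.
    set (b := dx (t * y1 + (1 - t) * y2) (t * x1 + (1 - t) * x2)) in *.
    assert (E : t * (R0 + a*(y1 - (t*y1+(1-t)*y2)) + b*(x1 - (t*x1+(1-t)*x2)))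
             + (1-t) * (R0 + a*(y2 - (t*y1+(1-t)*y2)) + b*(x2 - (t*x1+(1-t)*x2))) = R0) by ring.
    assert (T1 : t * (R0 + a*(y1 - (t*y1+(1-t)*y2)) + b*(x1 - (t*x1+(1-t)*x2))) <= t * D y1 x1)
      by (apply Rmult_le_compat_l; lra).
    assert (T2 : (1-t) * (R0 + a*(y2 - (t*y1+(1-t)*y2)) + b*(x2 - (t*x1+(1-t)*x2))) <= (1-t) * D y2 x2)
      by (apply Rmult_le_compat_l; lra).
    lra.
  - exists dy, dx. split.
    + intros y x Hq. split; [apply Hdy; auto|]. split; [apply Hdx; auto|]. split.
      * apply (cont_y D dy dx); auto.
      * pose proof (cont_y (swp D) (swp dx) (swp dy)) as Hc.
        assert (Hc' : cont2_at (swp dx) x y).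
        { apply Hc; auto.
          - intros a b Hq'. apply SUBG_swp. apply Hsub. apply quad_swp; auto.
          - intros a b Hq'. destruct (Hup b a (quad_swp _ _ Hq')) as [G HG]. exists (swp G).
            apply UPG_swp; auto.
          - intros a b Hq'. apply (Hdx b a (quad_swp _ _ Hq')).
          - apply quad_swp; auto. }
        intros eps He. destruct (Hc' eps He) as [d [Hd H']]. exists d; split; auto.
        intros a b Ha Hb. apply (H' b a); auto.
    + intros y x Hq. destruct (Hch y x Hq) as [G HG]. destruct HG as [_ [_ [_ [_ [H5 H6]]]]].
      split; auto.
Qed.

From Stdlib Require Import FunctionalExtensionality.

Lemma cont_ext (f g : R -> R) x : (forall z, f z = g z) -> continuity_pt f x -> continuity_pt g x.
Proof. intros H Hc. assert (f = g) by (extensionality z; auto). subst; auto. Qed.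

Lemma dpl_plus_const (f : R -> R) x l k : derivable_pt_lim f x l -> derivable_pt_lim (fun z => f z + k) x l.
Proof.
  intros H. pose proof (derivable_pt_lim_plus _ _ _ _ _ H (derivable_pt_lim_const k x)) as H'.
  rewrite Rplus_0_r in H'. eapply dpl_ext; [|exact H']. intros; reflexivity.
Qed.

Lemma cont2_sum (g1 g2 : R -> R) c y x : continuity_pt g1 y -> continuity_pt g2 x ->
  cont2_at (fun a b => g1 a + g2 b + c) y x.
Proof.
  intros H1 H2 eps He.
  destruct (cont_eps g1 y H1 (eps/2)) as [d1 [Hd1 H1']]; [lra|].
  destruct (cont_eps g2 x H2 (eps/2)) as [d2 [Hd2 H2']]; [lra|].
  exists (Rmin d1 d2). split; [apply Rmin_glb_lt; auto|].
  intros a b Ha Hb.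
  assert (A1 := H1' a ltac:(eapply Rlt_le_trans; [exact Ha|apply Rmin_l])).
  assert (A2 := H2' b ltac:(eapply Rlt_le_trans; [exact Hb|apply Rmin_r])).
  replace (g1 a + g2 b + c - (g1 y + g2 x + c)) with ((g1 a - g1 y) + (g2 b - g2 x)) by ring.
  eapply Rle_lt_trans; [apply Rabs_triang|]. lra.
Qed.

Lemma cont_rec (k : R -> R) c p q t : (forall z, continuity_pt k z) -> p*t+q <> 0 ->
  continuity_pt (fun s => k (c/(p*s+q))) t.
Proof.
  intros Hk Hn.
  assert (Ha : continuity_pt (fun s => p*s+q) t).
  { apply (dpl_cont _ _ p). pose proof (dpl_aff id p q 1 0 t 1 (derivable_pt_lim_id _)) as H.
    replace (1*(1*p)) with p in H by ring. eapply dpl_ext; [|exact H]. intros; unfold id; ring. }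
  pose proof (continuity_pt_div (fct_cte c) (fun s => p*s+q) t (continuity_pt_const (fct_cte c) t (fun _ _ => eq_refl)) Ha Hn) as Hd.
  pose proof (continuity_pt_comp _ k t Hd (Hk _)) as Hc.
  eapply cont_ext; [|exact Hc]. intros; reflexivity.
Qed.

Lemma Rinf_eq (S : R -> Prop) V : S V -> (forall r, S r -> V <= r) -> Rinf S = V.
Proof.
  intros H1 H2. assert (Hg : is_glb S V) by (split; auto).
  unfold Rinf. destruct (epsilon_spec (inhabits 0) (is_glb S) (ex_intro _ _ Hg)) as [A B].
  apply Rle_antisym; [apply A; auto| apply B; auto].
Qed.

Lemma E1_inv Lj L0 t y v : y <> 0 -> Defs.E1 Lj L0 t y = Some v -> t <> 0 /\ v = t*Lj(-y/t) - t*L0.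
Proof.
  intros Hy. unfold Defs.E1. destruct (Req_EM_T y 0); [contradiction|].
  destruct (Req_EM_T t 0); [discriminate|]. intros H; inversion H; auto.
Qed.
Lemma E1_val Lj L0 t y : y <> 0 -> t <> 0 -> Defs.E1 Lj L0 t y = Some (t*Lj(-y/t) - t*L0).
Proof.
  intros Hy Ht. unfold Defs.E1. destruct (Req_EM_T y 0); [contradiction|].
  destruct (Req_EM_T t 0); [contradiction|]. auto.
Qed.
Lemma E2_inv Li L0 t x v : x <> 0 -> Defs.E2 Li L0 t x = Some v -> t <> 1 /\ v = (1-t)*Li(x/(1-t)) + t*L0.
Proof.
  intros Hy. unfold Defs.E2. destruct (Req_EM_T x 0); [contradiction|].
  destruct (Req_EM_T t 1); [discriminate|]. intros H; inversion H; auto.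
Qed.
Lemma E2_val Li L0 t x : x <> 0 -> t <> 1 -> Defs.E2 Li L0 t x = Some ((1-t)*Li(x/(1-t)) + t*L0).
Proof.
  intros Hy Ht. unfold Defs.E2. destruct (Req_EM_T x 0); [contradiction|].
  destruct (Req_EM_T t 1); [contradiction|]. auto.
Qed.

Section Inst.
Variables Lj dLj d2Lj Li dLi d2Li : R -> R.
Variables g L0 : R.
Hypothesis Hg : 0 < g.
Hypothesis Hj1 : forall z, derivable_pt_lim Lj z (dLj z).
Hypothesis Hj2 : forall z, derivable_pt_lim dLj z (d2Lj z).
Hypothesis Hj3 : forall z, g <= d2Lj z.
Hypothesis Hi1 : forall z, derivable_pt_lim Li z (dLi z).
Hypothesis Hi2 : forall z, derivable_pt_lim dLi z (d2Li z).
Hypothesis Hi3 : forall z, g <= d2Li z.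

Lemma lb_core s1 s2 a b c y' x' : 0 < s1 -> s1 <= s2 -> s2 < 1 -> (s1 = s2 \/ c <= L0) ->
  Kt Lj dLj a = c -> Kt Li dLi b = c ->
  c - y' * dLj a + x' * dLi b <= s1*Lj(-y'/s1) - s1*L0 + ((1-s2)*Li(x'/(1-s2)) + s2*L0).
Proof.
  intros H1 H2 H3 H4 Ka Kb. unfold Kt in Ka, Kb.
  pose proof (tangent Lj dLj d2Lj g Hg Hj1 Hj2 Hj3 a (-y'/s1)) as T1.
  pose proof (tangent Li dLi d2Li g Hg Hi1 Hi2 Hi3 b (x'/(1-s2))) as T2.
  apply (Rmult_le_compat_l s1) in T1; [|lra].
  apply (Rmult_le_compat_l (1-s2)) in T2; [|lra].
  replace (s1 * (Lj a + dLj a * (- y' / s1 - a))) with (s1 * (Lj a - a * dLj a) - y' * dLj a) in T1 by (field; lra).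
  replace ((1-s2) * (Li b + dLi b * (x' / (1-s2) - b))) with ((1-s2) * (Li b - b * dLi b) + x' * dLi b) in T2 by (field; lra).
  rewrite Ka in T1. rewrite Kb in T2.
  assert (0 <= (s2 - s1) * (L0 - c)).
  { destruct H4 as [->|H4]; [lra|]. apply Rmult_le_pos; lra. }
  nra.
Qed.

Definition Sj y x r := exists t1 t2 a b, 0 <= t1 <= t2 /\ t2 <= 1 /\
  Defs.E1 Lj L0 t1 y = Some a /\ Defs.E2 Li L0 t2 x = Some b /\ r = a + b.
Definition Si y x r := exists t a b, 0 <= t <= 1 /\
  Defs.E1 Lj L0 t y = Some a /\ Defs.E2 Li L0 t x = Some b /\ r = a + b.

Definition JC y x t1 t2 a b c := 0 < t1 /\ t1 <= t2 /\ t2 < 1 /\ y = -t1*a /\ x = (1-t2)*b /\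
  Kt Lj dLj a = c /\ Kt Li dLi b = c /\ c <= L0 /\ (t1 = t2 \/ c = L0).
Definition IC y x t a b c := 0 < t /\ t < 1 /\ y = -t*a /\ x = (1-t)*b /\
  Kt Lj dLj a = c /\ Kt Li dLi b = c.

Lemma Sj_lb y' x' a b c : quad y' x' -> c <= L0 -> Kt Lj dLj a = c -> Kt Li dLi b = c ->
  forall r, Sj y' x' r -> c - y' * dLj a + x' * dLi b <= r.
Proof.
  intros [Hy Hx] Hc Ka Kb r [t1 [t2 [u [v [H1 [H2 [H3 [H4 ->]]]]]]]].
  apply E1_inv in H3; [|lra]. apply E2_inv in H4; [|lra].
  destruct H3 as [Ht1 ->]. destruct H4 as [Ht2 ->].
  apply lb_core; auto; lra.
Qed.

Lemma Si_lb y' x' a b c : quad y' x' -> Kt Lj dLj a = c -> Kt Li dLi b = c ->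
  forall r, Si y' x' r -> c - y' * dLj a + x' * dLi b <= r.
Proof.
  intros [Hy Hx] Ka Kb r [t [u [v [H1 [H3 [H4 ->]]]]]].
  apply E1_inv in H3; [|lra]. apply E2_inv in H4; [|lra].
  destruct H3 as [Ht1 ->]. destruct H4 as [Ht2 ->].
  apply lb_core; auto; lra.
Qed.

Definition Gf t1 t2 := fun y x => (t1 * Lj (-/t1 * y + 0) + 0) + ((1-t2) * Li (/(1-t2) * x + 0) + 0) + (t2-t1)*L0.

Lemma Gf_eq t1 t2 y x : t1 <> 0 -> t2 <> 1 ->
  Gf t1 t2 y x = t1*Lj(-y/t1) - t1*L0 + ((1-t2)*Li(x/(1-t2)) + t2*L0).
Proof.
  intros H1 H2. unfold Gf.
  replace (-/t1 * y + 0) with (-y/t1) by (field; auto).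
  replace (/(1-t2) * x + 0) with (x/(1-t2)) by (field; lra). ring.
Qed.

Lemma Gf_Sj t1 t2 y x : quad y x -> 0 < t1 -> t1 <= t2 -> t2 < 1 -> Sj y x (Gf t1 t2 y x).
Proof.
  intros [Hy Hx] H1 H2 H3. exists t1, t2, (t1*Lj(-y/t1) - t1*L0), ((1-t2)*Li(x/(1-t2)) + t2*L0). split; [lra|]. split; [lra|].
  split; [apply E1_val; lra|]. split; [apply E2_val; lra|]. apply Gf_eq; lra.
Qed.

Lemma Gf_Si t y x : quad y x -> 0 < t -> t < 1 -> Si y x (Gf t t y x).
Proof.
  intros [Hy Hx] H1 H3. exists t, (t*Lj(-y/t) - t*L0), ((1-t)*Li(x/(1-t)) + t*L0). split; [lra|].
  split; [apply E1_val; lra|]. split; [apply E2_val; lra|]. apply Gf_eq; lra.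
Qed.

Lemma Gf_val y x t1 t2 a b c : 0 < t1 -> t2 < 1 -> y = -t1*a -> x = (1-t2)*b ->
  Kt Lj dLj a = c -> Kt Li dLi b = c -> (t1 = t2 \/ c = L0) ->
  Gf t1 t2 y x = c - y * dLj a + x * dLi b.
Proof.
  intros H1 H2 Hy Hx Ka Kb Hd. rewrite Gf_eq; try lra.
  replace (-y/t1) with a by (subst; field; lra).
  replace (x/(1-t2)) with b by (subst; field; lra).
  unfold Kt in Ka, Kb. subst y x.
  destruct Hd as [<-| ->]; nra.
Qed.

Lemma Gf_cont t1 t2 y x : t1 <> 0 -> t2 <> 1 -> cont2_at (Gf t1 t2) y x.
Proof.
  intros H1 H2. unfold Gf. apply cont2_sum.
  - apply (dpl_cont _ _ _ (dpl_aff Lj _ _ _ _ _ _ (Hj1 _))).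
  - apply (dpl_cont _ _ _ (dpl_aff Li _ _ _ _ _ _ (Hi1 _))).
Qed.

Lemma Gf_dy t1 t2 y x : t1 <> 0 -> derivable_pt_lim (fun y' => Gf t1 t2 y' x) y (- dLj (-y/t1)).
Proof.
  intros H1. unfold Gf.
  pose proof (dpl_aff Lj (-/t1) 0 t1 0 y _ (Hj1 _)) as H.
  replace (-/t1*y+0) with (-y/t1) in H by (field; auto).
  replace (- dLj (-y/t1)) with (t1 * (dLj (- y / t1) * - / t1)) by (field; auto).
  apply dpl_plus_const. apply dpl_plus_const. exact H.
Qed.

Lemma Gf_dx t1 t2 y x : t2 <> 1 -> derivable_pt_lim (fun x' => Gf t1 t2 y x') x (dLi (x/(1-t2))).
Proof.
  intros H1. unfold Gf.
  pose proof (dpl_aff Li (/(1-t2)) 0 (1-t2) 0 x _ (Hi1 _)) as H.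
  replace (/(1-t2)*x+0) with (x/(1-t2)) in H by (field; lra).
  replace (dLi (x/(1-t2))) with ((1-t2) * (dLi (x/(1-t2)) * / (1-t2))) by (field; lra).
  apply (dpl_plus_const _ _ _ (t1 * Lj (- / t1 * y + 0) + 0 + (t2-t1)*L0)) in H.
  eapply dpl_ext; [|exact H]. intros; simpl; ring.
Qed.



Lemma Kj_cont z : continuity_pt (Kt Lj dLj) z.
Proof. exact (dpl_cont _ _ _ (Kt_der Lj dLj d2Lj Hj1 Hj2 z)). Qed.
Lemma Ki_cont z : continuity_pt (Kt Li dLi) z.
Proof. exact (dpl_cont _ _ _ (Kt_der Li dLi d2Li Hi1 Hi2 z)). Qed.

Lemma imp_exists y x : quad y x -> exists t a b c, IC y x t a b c.
Proof.
  intros [Hy Hx].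
  set (Kj := Kt Lj dLj). set (Ki := Kt Li dLi).
  set (F := fun s => Kj (-y/(1*s+0)) - Ki (x/(-1*s+1))).
  set (C1 := Kj 0 - Ki (2*x)). set (M1 := g*(y*y)/(2*(Rabs C1+1))).
  set (ta := Rmin (1/2) M1).
  assert (HM1: 0 < M1) by (unfold M1; apply Rdiv_lt_0_compat; [apply Rmult_lt_0_compat; [lra| apply Rmult_lt_0_compat; lra]| pose proof (Rabs_pos C1); lra]).
  assert (Hta: 0 < ta /\ ta <= 1/2 /\ ta <= M1)
    by (unfold ta; split; [apply Rmin_glb_lt; lra| split; [apply Rmin_l|apply Rmin_r]]).
  assert (Fa : F ta < 0).
  { unfold F. replace (1*ta+0) with ta by ring. replace (-1*ta+1) with (1-ta) by ring.
    set (z := -y/ta).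
    pose proof (Kt_bound Lj dLj d2Lj g Hj1 Hj2 Hj3 z) as B. fold Kj in B.
    assert (Hm := Kt_mono_pos Li dLi d2Li g Hg Hi1 Hi2 Hi3 (x/(1-ta)) (2*x)). fold Ki in Hm.
    assert (Hu : x/(1-ta) <= 2*x).
    { apply Rmult_le_reg_r with (1-ta); [lra|]. unfold Rdiv. rewrite Rmult_assoc, Rinv_l; [|lra]. nra. }
    assert (Hu0 : 0 <= x/(1-ta)) by (apply Rlt_le, Rdiv_lt_0_compat; lra).
    specialize (Hm Hu0 Hu).
    assert (Ez : z * ta = -y) by (unfold z; field; lra).
    assert (HC : C1 <= Rabs C1) by apply Rle_abs.
    assert (HM : M1 * (2*(Rabs C1+1)) = g*(y*y)) by (unfold M1; field; pose proof (Rabs_pos C1); lra).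
    assert (Htt : ta*ta <= M1) by nra.
    assert (Hzz : g*(z*z)*(ta*ta) = g*(y*y)) by (replace (y*y) with ((z*ta)*(z*ta)) by (rewrite Ez; ring); ring).
    assert (Hk : 2*(Rabs C1 + 1) <= g*(z*z)).
    { apply Rmult_le_reg_r with (ta*ta); [nra|]. pose proof (Rabs_pos C1). nra. }
    unfold C1 in *. lra. }
  set (C2 := Ki 0 - Kj (-(2*y))). set (M2 := g*(x*x)/(2*(Rabs C2+1))).
  set (sb := Rmin (1/2) M2).
  assert (HM2: 0 < M2) by (unfold M2; apply Rdiv_lt_0_compat; [apply Rmult_lt_0_compat; [lra| apply Rmult_lt_0_compat; lra]| pose proof (Rabs_pos C2); lra]).
  assert (Hsb: 0 < sb /\ sb <= 1/2 /\ sb <= M2)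
    by (unfold sb; split; [apply Rmin_glb_lt; lra| split; [apply Rmin_l|apply Rmin_r]]).
  set (tb := 1 - sb).
  assert (Fb : 0 < F tb).
  { unfold F. replace (1*tb+0) with (1-sb) by (unfold tb; ring). replace (-1*tb+1) with sb by (unfold tb; ring).
    set (z := x/sb).
    pose proof (Kt_bound Li dLi d2Li g Hi1 Hi2 Hi3 z) as B. fold Ki in B.
    assert (Hm := Kt_mono_neg Lj dLj d2Lj g Hg Hj1 Hj2 Hj3 (-(2*y)) (-y/(1-sb))). fold Kj in Hm.
    assert (Hu : -(2*y) <= -y/(1-sb)).
    { assert (y/(1-sb) <= 2*y).
      { apply Rmult_le_reg_r with (1-sb); [lra|]. unfold Rdiv. rewrite Rmult_assoc, Rinv_l; [|lra]. nra. }
      unfold Rdiv in *. lra. }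
    assert (Hu0 : -y/(1-sb) <= 0).
    { assert (0 < y/(1-sb)) by (apply Rdiv_lt_0_compat; lra). unfold Rdiv in *. lra. }
    specialize (Hm Hu Hu0).
    assert (Ez : z * sb = x) by (unfold z; field; lra).
    assert (HC : C2 <= Rabs C2) by apply Rle_abs.
    assert (HM : M2 * (2*(Rabs C2+1)) = g*(x*x)) by (unfold M2; field; pose proof (Rabs_pos C2); lra).
    assert (Htt : sb*sb <= M2) by nra.
    assert (Hzz : g*(z*z)*(sb*sb) = g*(x*x)) by (replace (x*x) with ((z*sb)*(z*sb)) by (rewrite Ez; ring); ring).
    assert (Hk : 2*(Rabs C2 + 1) <= g*(z*z)).
    { apply Rmult_le_reg_r with (sb*sb); [nra|]. pose proof (Rabs_pos C2). nra. }
    unfold C2 in *. lra. }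
  assert (Hab : ta < tb).
  { assert (ta <= tb) by (unfold tb; lra). destruct (Req_dec ta tb) as [He|]; [|lra].
    rewrite He in Fa. lra. }
  assert (Hcont : forall s, ta <= s <= tb -> continuity_pt F s).
  { intros s Hs. unfold F. apply continuity_pt_minus.
    - apply cont_rec; [apply Kj_cont| lra].
    - apply cont_rec; [apply Ki_cont| unfold tb in Hs; lra]. }
  destruct (Ranalysis5.IVT_interv F ta tb Hcont Hab Fa Fb) as [t [Ht HF]].
  unfold F in HF. replace (1*t+0) with t in HF by ring. replace (-1*t+1) with (1-t) in HF by ring.
  exists t, (-y/t), (x/(1-t)), (Kj (-y/t)).
  unfold tb in Ht.
  split; [lra|]. split; [lra|]. split; [field; lra|]. split; [field; lra|].
  split; [reflexivity|]. fold Ki. lra.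
Qed.

Lemma jun_exists xm xp y x : xm <= 0 -> Kt Lj dLj xm = L0 -> 0 <= xp -> Kt Li dLi xp = L0 ->
  quad y x -> exists t1 t2 a b c, JC y x t1 t2 a b c.
Proof.
  intros Hxm Kxm Hxp Kxp Hq. pose proof Hq as [Hy Hx].
  destruct (classic (xm < 0 /\ 0 < xp /\ y/(-xm) + x/xp <= 1)) as [[H1 [H2 H3]]|Hn].
  - exists (y/(-xm)), (1 - x/xp), xm, xp, L0.
    assert (0 < y/(-xm)) by (apply Rdiv_lt_0_compat; lra).
    assert (0 < x/xp) by (apply Rdiv_lt_0_compat; lra).
    split; [lra|]. split; [lra|]. split; [lra|]. split; [field; lra|]. split; [field; lra|].
    split; [auto|]. split; [auto|]. split; [lra|]. right; auto.
  - destruct (imp_exists y x Hq) as [t [a [b [c [Ht0 [Ht1 [Ey [Ex [Ka Kb]]]]]]]]].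
    exists t, t, a, b, c.
    split; [lra|]. split; [lra|]. split; [lra|]. split; [auto|]. split; [auto|].
    split; [auto|]. split; [auto|]. split; [|left; auto].
    destruct (Rle_lt_dec c L0) as [Hc|Hc]; [auto|exfalso].
    assert (Ha : a < 0) by nra. assert (Hb : 0 < b) by nra.
    assert (Ha2 : xm < a).
    { destruct (Rlt_le_dec xm a) as [h|h]; [auto|].
      pose proof (Kt_mono_neg Lj dLj d2Lj g Hg Hj1 Hj2 Hj3 a xm h Hxm). lra. }
    assert (Hb2 : b < xp).
    { destruct (Rlt_le_dec b xp) as [h|h]; [auto|].
      pose proof (Kt_mono_pos Li dLi d2Li g Hg Hi1 Hi2 Hi3 xp b Hxp h). lra. }
    apply Hn. split; [lra|]. split; [lra|].
    set (u := y/(-xm)). set (v := x/xp).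
    assert (Eu : u * (-xm) = y) by (unfold u; field; lra).
    assert (Ev : v * xp = x) by (unfold v; field; lra).
    assert (u < t) by nra. assert (v < 1 - t) by nra. lra.
Qed.

Lemma Dj_mem y x t1 t2 a b c : quad y x -> JC y x t1 t2 a b c -> Sj y x (c - y*dLj a + x*dLi b).
Proof.
  intros Hq [H1 [H2 [H3 [Ey [Ex [Ka [Kb [Hc Hd]]]]]]]].
  rewrite <- (Gf_val y x t1 t2 a b c); auto.
  apply Gf_Sj; auto.
Qed.

Lemma Dj_val y x t1 t2 a b c : quad y x -> JC y x t1 t2 a b c ->
  Djunction Lj Li L0 y x = c - y*dLj a + x*dLi b.
Proof.
  intros Hq HJ. unfold Djunction. change (Rinf (Sj y x) = c - y * dLj a + x * dLi b).
  apply Rinf_eq; [apply (Dj_mem _ _ t1 t2); auto|].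
  destruct HJ as [H1 [H2 [H3 [Ey [Ex [Ka [Kb [Hc Hd]]]]]]]]. apply Sj_lb; auto.
Qed.

Lemma Di_mem y x t a b c : quad y x -> IC y x t a b c -> Si y x (c - y*dLj a + x*dLi b).
Proof.
  intros Hq [H1 [H3 [Ey [Ex [Ka Kb]]]]].
  rewrite <- (Gf_val y x t t a b c); auto.
  apply Gf_Si; auto.
Qed.

Lemma Di_val y x t a b c : quad y x -> IC y x t a b c ->
  Dimplicit Lj Li L0 y x = c - y*dLj a + x*dLi b.
Proof.
  intros Hq HI. unfold Dimplicit. change (Rinf (Si y x) = c - y * dLj a + x * dLi b).
  apply Rinf_eq; [apply (Di_mem _ _ t); auto|].
  destruct HI as [H1 [H3 [Ey [Ex [Ka Kb]]]]]. apply Si_lb; auto.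
Qed.

Lemma HJ_common (D : R) y x a b c : Kt Lj dLj a = c -> Kt Li dLi b = c ->
  D = c - y*dLj a + x*dLi b ->
  D - x * dLi b - y * (- dLj a) + Hconj Li (dLi b) = 0 /\
  D - x * dLi b - y * (- dLj a) + Hconj Lj (- - dLj a) = 0.
Proof.
  intros Ka Kb ->. rewrite Ropp_involutive.
  rewrite (Hconj_eq Li dLi d2Li g Hg Hi1 Hi2 Hi3).
  rewrite (Hconj_eq Lj dLj d2Lj g Hg Hj1 Hj2 Hj3).
  unfold Kt in Ka, Kb. split; lra.
Qed.

Lemma jun_GEN xm xp : xm <= 0 -> Kt Lj dLj xm = L0 -> 0 <= xp -> Kt Li dLi xp = L0 ->
  forall y x, quad y x -> exists vy vx G,
    PROPS (Hconj Lj) (Hconj Li) (Djunction Lj Li L0) y x vy vx G.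
Proof.
  intros H1 H2 H3 H4 y x Hq.
  destruct (jun_exists xm xp y x H1 H2 H3 H4 Hq) as [t1 [t2 [a [b [c HJ]]]]].
  pose proof HJ as [T1 [T2 [T3 [Ey [Ex [Ka [Kb [Hc Hd]]]]]]]].
  exists (- dLj a), (dLi b), (Gf t1 t2).
  split; [|split; [|split; [|split]]].
  - intros y' x' Hq'. rewrite (Dj_val y x t1 t2 a b c Hq HJ).
    destruct (jun_exists xm xp y' x' H1 H2 H3 H4 Hq') as [s1 [s2 [a' [b' [c' HJ']]]]].
    rewrite (Dj_val y' x' s1 s2 a' b' c' Hq' HJ').
    pose proof (Sj_lb y' x' a b c Hq' Hc Ka Kb _ (Dj_mem y' x' s1 s2 a' b' c' Hq' HJ')). lra.
  - split; [|split].
    + intros y' x' Hq'.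
      destruct (jun_exists xm xp y' x' H1 H2 H3 H4 Hq') as [s1 [s2 [a' [b' [c' HJ']]]]].
      rewrite (Dj_val y' x' s1 s2 a' b' c' Hq' HJ').
      pose proof HJ' as [S1 [S2 [S3 [_ [_ [Ka' [Kb' [Hc' _]]]]]]]].
      apply (Sj_lb y' x' a' b' c' Hq' Hc' Ka' Kb'). apply Gf_Sj; auto.
    + rewrite (Dj_val y x t1 t2 a b c Hq HJ). apply Gf_val; auto.
    + apply Gf_cont; lra.
  - pose proof (Gf_dy t1 t2 y x ltac:(lra)) as HH. replace (-y/t1) with a in HH by (subst y; field; lra). exact HH.
  - pose proof (Gf_dx t1 t2 y x ltac:(lra)) as HH. replace (x/(1-t2)) with b in HH by (subst x; field; lra). exact HH.
  - apply (HJ_common _ y x a b c Ka Kb). apply (Dj_val y x t1 t2 a b c Hq HJ).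
Qed.

Lemma imp_GEN : forall y x, quad y x -> exists vy vx G,
    PROPS (Hconj Lj) (Hconj Li) (Dimplicit Lj Li L0) y x vy vx G.
Proof.
  intros y x Hq.
  destruct (imp_exists y x Hq) as [t [a [b [c HI]]]].
  pose proof HI as [T1 [T3 [Ey [Ex [Ka Kb]]]]].
  exists (- dLj a), (dLi b), (Gf t t).
  split; [|split; [|split; [|split]]].
  - intros y' x' Hq'. rewrite (Di_val y x t a b c Hq HI).
    destruct (imp_exists y' x' Hq') as [s [a' [b' [c' HI']]]].
    rewrite (Di_val y' x' s a' b' c' Hq' HI').
    pose proof (Si_lb y' x' a b c Hq' Ka Kb _ (Di_mem y' x' s a' b' c' Hq' HI')). lra.
  - split; [|split].
    + intros y' x' Hq'.
      destruct (imp_exists y' x' Hq') as [s [a' [b' [c' HI']]]].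
      rewrite (Di_val y' x' s a' b' c' Hq' HI').
      pose proof HI' as [S1 [S3 [_ [_ [Ka' Kb']]]]].
      apply (Si_lb y' x' a' b' c' Hq' Ka' Kb'). apply Gf_Si; auto.
    + rewrite (Di_val y x t a b c Hq HI). apply Gf_val; auto.
    + apply Gf_cont; lra.
  - pose proof (Gf_dy t t y x ltac:(lra)) as HH. replace (-y/t) with a in HH by (subst y; field; lra). exact HH.
  - pose proof (Gf_dx t t y x ltac:(lra)) as HH. replace (x/(1-t)) with b in HH by (subst x; field; lra). exact HH.
  - apply (HJ_common _ y x a b c Ka Kb). apply (Di_val y x t a b c Hq HI).
Qed.

Lemma dlin k m x : derivable_pt_lim (fun z => k*z + m) x k.
Proof.
  pose proof (dpl_aff id k 0 1 m x 1 (derivable_pt_lim_id _)) as H.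
  replace (1*(1*k)) with k in H by ring. eapply dpl_ext; [|exact H]. intros; unfold id; ring.
Qed.

Lemma lin_GEN xm xp : Kt Lj dLj xm = L0 -> Kt Li dLi xp = L0 ->
  forall y x, quad y x -> exists vy vx G,
    PROPS (Hconj Lj) (Hconj Li) (Dlinear dLj dLi xm xp L0) y x vy vx G.
Proof.
  intros K1 K2 y x Hq. exists (- dLj xm), (dLi xp), (Dlinear dLj dLi xm xp L0).
  unfold Dlinear. split; [|split; [|split; [|split]]].
  - intros y' x' _. lra.
  - split; [intros; lra|]. split; [reflexivity|].
    apply (cont2_sum (fun a => - dLj xm * a) (fun b => dLi xp * b) L0).
    + apply (dpl_cont _ _ (- dLj xm)). eapply dpl_ext; [|apply (dlin (- dLj xm) 0)]. intros; simpl; ring.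
    + apply (dpl_cont _ _ (dLi xp)). eapply dpl_ext; [|apply (dlin (dLi xp) 0)]. intros; simpl; ring.
  - eapply dpl_ext; [|apply (dlin (- dLj xm) (dLi xp * x + L0))]. intros; simpl; ring.
  - eapply dpl_ext; [|apply (dlin (dLi xp) (- dLj xm * y + L0))]. intros; simpl; ring.
  - apply (HJ_common _ y x xm xp L0 K1 K2). ring.
Qed.

End Inst.

Theorem mainTheorem18
  (N : nat) (L dL d2L : nat -> R -> R) (gamma : R) (xim xip : nat -> R)
  (HN : (1 <= N)%nat)
  (Hgamma : 0 < gamma)
  (HdL : forall l, (l < N)%nat -> forall z, derivable_pt_lim (L l) z (dL l z))
  (Hd2L : forall l, (l < N)%nat -> forall z, derivable_pt_lim (dL l) z (d2L l z))
  (Hcont : forall l, (l < N)%nat -> continuity (d2L l))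
  (Hconv : forall l, (l < N)%nat -> forall z, gamma <= d2L l z)
  (Hxim : forall l, (l < N)%nat ->
     xim l <= 0 /\ Kfun (L l) (dL l) (L0min N L) (xim l) = 0 /\
     forall z, z <= 0 -> Kfun (L l) (dL l) (L0min N L) z = 0 -> z = xim l)
  (Hxip : forall l, (l < N)%nat ->
     0 <= xip l /\ Kfun (L l) (dL l) (L0min N L) (xip l) = 0 /\
     forall z, 0 <= z -> Kfun (L l) (dL l) (L0min N L) z = 0 -> z = xip l)
  (i j : nat) (Hi : (i < N)%nat) (Hj : (j < N)%nat) :
  junction_property (Hconj (L j)) (Hconj (L i))
    (Djunction (L j) (L i) (L0min N L)) /\
  junction_property (Hconj (L j)) (Hconj (L i))
    (Dlinear (dL j) (dL i) (xim j) (xip i) (L0min N L)) /\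
  junction_property (Hconj (L j)) (Hconj (L i))
    (Dimplicit (L j) (L i) (L0min N L)).
Proof.
  destruct (Hxim j Hj) as [Xm1 [Xm2 _]]. destruct (Hxip i Hi) as [Xp1 [Xp2 _]].
  assert (K1 : Kt (L j) (dL j) (xim j) = L0min N L) by (unfold Kfun in Xm2; unfold Kt; lra).
  assert (K2 : Kt (L i) (dL i) (xip i) = L0min N L) by (unfold Kfun in Xp2; unfold Kt; lra).
  split; [|split]; apply GEN.
  - apply (jun_GEN (L j) (dL j) (d2L j) (L i) (dL i) (d2L i) gamma (L0min N L) Hgamma
      (HdL j Hj) (Hd2L j Hj) (Hconv j Hj) (HdL i Hi) (Hd2L i Hi) (Hconv i Hi) (xim j) (xip i)); auto.
  - apply (lin_GEN (L j) (dL j) (d2L j) (L i) (dL i) (d2L i) gamma (L0min N L) Hgamma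
      (HdL j Hj) (Hd2L j Hj) (Hconv j Hj) (HdL i Hi) (Hd2L i Hi) (Hconv i Hi) (xim j) (xip i)); auto.
  - apply (imp_GEN (L j) (dL j) (d2L j) (L i) (dL i) (d2L i) gamma (L0min N L) Hgamma
      (HdL j Hj) (Hd2L j Hj) (Hconv j Hj) (HdL i Hi) (Hd2L i Hi) (Hconv i Hi)).
Qed.
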